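(* Consider the following permutation model $\mathcal V$ (in $\mathsf{ZFA}$ with choice in the ground). The set of atoms is $A=\bigcup_{n\in\omega}P_n$, where $P_n=\{a_n,b_n,c_n\}$ are pairwise disjoint 3-element sets, each carrying the cyclic order $a_n\to b_n\to c_n\to a_n$. Let $G$ be the group of all permutations $\pi$ of $A$ such that $\pi[P_n]=P_n$ for all $n$ and $\pi$ preserves each cyclic ordering (i.e. $\pi\restriction P_n$ is a power of the 3-cycle $(a_n\,b_n\,c_n)$ for every $n$). Let $\mathcal V$ be the class of hereditarily symmetric sets with respect to finite supports. Let $\mathfrak m=|A|$. Then in $\mathcal V$: $$[\mathfrak m]^2<\mathfrak m^2<\mathrm{seq}^{1-1}(\mathfrak m)<\mathrm{fin}(\mathfrak m).$$
   Context: Permutation model: $\pi\in G$ acts on sets by $\pi x=\{\pi y:y\in x\}$; $\mathrm{Fix}_G(E)=\{\pi\in G:\pi a=a\ \forall a\in E\}$; a set $x$ is symmetric if for some finite $E\subseteq A$, every $\pi\in\mathrm{Fix}_G(E)$ satisfies $\pi x=x$; $\mathcal V$ is the class of hereditarily symmetric sets. For a set $M$: $M^2=M\times M$, $[M]^2$ = 2-element subsets, $\mathrm{seq}^{1-1}(M)$ = finite sequences without repetition, $\mathrm{fin}(M)$ = finite subsets; for $\mathfrak m=|M|$ the corresponding symbols denote cardinalities. $|X|<|Y|$ means an injection $X\to Y$ exists but no bijection. *)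

(* Defs.v *)
From HB Require Import structures.
From mathcomp Require Import all_boot all_order all_algebra.
From mathcomp Require Import finmap.
Set Implicit Arguments. Unset Strict Implicit. Unset Printing Implicit Defensive.
Import GRing.Theory.

(* Atoms: A = \bigcup_n P_n with P_n = {a_n, b_n, c_n}; the atom (n, i) is
   a_n, b_n, c_n for i = 0, 1, 2 respectively; the cyclic order is i -> i+1 (mod 3). *)
Definition Atom := (nat * 'I_3)%type.

(* An element of G is a permutation pi of A with pi[P_n] = P_n and
   pi|P_n = (a_n b_n c_n)^(g n); we record it by its exponents g. *)
Definition Gelt := nat -> 'I_3.

Definition gact (g : Gelt) (a : Atom) : Atom := (a.1, (a.2 + g a.1)%R).

Definition fixes (g : Gelt) (E : {fset Atom}) : Prop :=
  forall a, a \in E -> gact g a = a.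

(* Sets in the model on which G acts (by pi x = {pi y : y in x}). *)
Record GSet := { carrier :> Type; act : Gelt -> carrier -> carrier }.

Definition AtomsG : GSet := {| carrier := Atom; act := gact |}.

Definition SquareG : GSet :=
  {| carrier := (Atom * Atom)%type;
     act := fun g p => (gact g p.1, gact g p.2) |}.

Definition pair2 := {s : {fset Atom} | #|` s| == 2}.
Definition pair2_act (g : Gelt) (s : pair2) : pair2 :=
  insubd s [fset gact g x | x in val s]%fset.
Definition Pair2G : GSet := {| carrier := pair2; act := pair2_act |}.

Definition useq := {s : seq Atom | uniq s}.
Definition useq_act (g : Gelt) (s : useq) : useq :=
  insubd s (map (gact g) (val s)).
Definition SeqG : GSet := {| carrier := useq; act := useq_act |}.

Definition FinG : GSet :=
  {| carrier := {fset Atom};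
     act := fun g s => [fset gact g x | x in s]%fset |}.

(* A function f : X -> Y belongs to V iff its graph is symmetric, i.e. for some
   finite support E, every pi in Fix_G(E) satisfies pi f = f, i.e.
   f (pi x) = pi (f x). *)
Definition symmetric_fun (X Y : GSet) (f : X -> Y) : Prop :=
  exists E : {fset Atom}, forall g, fixes g E ->
    forall x : X, f (act g x) = act g (f x).

Definition card_le_V (X Y : GSet) : Prop :=
  exists f : X -> Y, symmetric_fun f /\ injective f.
Definition card_lt_V (X Y : GSet) : Prop :=
  card_le_V X Y /\ ~ (exists f : X -> Y, symmetric_fun f /\ bijective f).

(* Main.v *)
Require Import Defs.
From mathcomp Require Import all_boot all_order all_algebra.
From mathcomp Require Import finmap zify.
Import GRing.Theory.
Local Open Scope fset_scope.

Lemma gact_inj g : injective (gact g).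
Proof.
move=> [n i] [m j] E; have /= E1 := congr1 fst E; have /= E2 := congr1 snd E.
by subst m; move: E2 => /addIr ->.
Qed.

Lemma val_useq_act g s : val (useq_act g s) = map (gact g) (val s).
Proof.
rewrite /useq_act insubdK // -topredE /= map_inj_uniq; [exact: valP | exact: gact_inj].
Qed.

Lemma val_pair2_act g p : val (pair2_act g p) = [fset gact g x | x in val p].
Proof.
rewrite /pair2_act insubdK // -topredE /=.
have /eqP E := valP p. rewrite -[X in _ == X]E. apply/card_in_imfsetP => x y _ _; exact: gact_inj.
Qed.

Lemma map_fix (f : Atom -> Atom) s : map f s = s -> forall x, x \in s -> f x = x.
Proof.
elim: s => [|a s IH] //= [E1 /IH H] x; rewrite inE => /orP[/eqP -> //|]; exact: H.
Qed.

Lemma addI3 (a b : 'I_3) : (a + b == a)%R = (b == 0%R).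
Proof. by case: a => [[|[|[|k]]] Ha]; case: b => [[|[|[|l]]] Hb]. Qed.

Definition better (x y : Atom) :=
  (x.1 < y.1) || ((x.1 == y.1) && (y.2 == x.2 + 1)%R).
Definition ord2 (x y : Atom) : Atom * Atom := if better x y then (x, y) else (y, x).

Lemma better_g g x y : better (gact g x) (gact g y) = better x y.
Proof.
rewrite /better /=; case: eqP => //= E; rewrite E addrAC.
by rewrite (inj_eq (addIr _)).
Qed.

Lemma ord2_g g x y :
  ord2 (gact g x) (gact g y) = (gact g (ord2 x y).1, gact g (ord2 x y).2).
Proof. by rewrite /ord2 better_g; case: ifP. Qed.

Lemma ord2C x y : x != y -> ord2 x y = ord2 y x.
Proof.
case: x y => [n i] [m j] H; rewrite /ord2 /better /=; move: H.
move=> H; case: (ltngtP n m) => E /=.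
- by [].
- by [].
- subst m; move: H; rewrite xpair_eqE eqxx /=.
  by case: i => [[|[|[|k]]] Hi]; case: j => [[|[|[|l]]] Hj].
Qed.

Lemma ord2_cases x y : ord2 x y = (x, y) \/ ord2 x y = (y, x).
Proof. rewrite /ord2; case: ifP; by [left|right]. Qed.

Lemma seq2 (s : seq Atom) x y : uniq s -> size s = 2 -> x \in s -> y \in s ->
  x != y -> s = [:: x; y] \/ s = [:: y; x].
Proof.
case: s => [|u [|v [|]]] //= /andP[]; rewrite !inE => uv _ _.
move=> /orP[]/eqP-> /orP[]/eqP->; rewrite ?eqxx //; by [left|right].
Qed.

Definition two (S : {fset Atom}) : Atom * Atom :=
  if enum_fset S is [:: x; y] then (x, y) else ((0, ord0), (0, ord0)).

Lemma pair2_elems (p : pair2) : exists x y, [/\ x \in val p, y \in val p, x != y &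
   forall z, z \in val p -> z = x \/ z = y].
Proof.
case: p => S /= /eqP cS.
have {}cS : size (enum_fset S) = 2 by [].
have U : uniq (enum_fset S) := fset_uniq S.
have M : forall z, (z \in S) = (z \in enum_fset S) by [].
move: cS U; case E: (enum_fset S) => [|u [|v [|]]] //= _ /andP[]; rewrite inE => uv _.
exists u, v; split; rewrite ?M ?E ?inE ?eqxx ?orbT //.
move=> z; rewrite M E !inE => /orP[]/eqP->; by [left|right].
Qed.

Lemma pair2_mem2 (p : pair2) x y : x \in val p -> y \in val p -> x != y ->
  forall z, z \in val p -> z = x \/ z = y.
Proof.
have [u [v [uin vin uv H]]] := pair2_elems p.
move=> xin yin xy z zin.
move: xy; case: (H _ xin) => ->; case: (H _ yin) => ->; rewrite ?eqxx // => _;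
case: (H _ zin) => ->; by [left|right].
Qed.

Definition f1 (p : pair2) : Atom * Atom := let t := two (val p) in ord2 t.1 t.2.

Lemma f1E (p : pair2) x y : x \in val p -> y \in val p -> x != y -> f1 p = ord2 x y.
Proof.
move=> xin yin xy; rewrite /f1 /two.
have cS : size (enum_fset (val p)) = 2 by have /eqP := valP p.
case: (@seq2 _ x y (fset_uniq _) cS xin yin xy) => -> //=.
by rewrite ord2C // eq_sym.
Qed.

Lemma mem_f1 (p : pair2) z : (z \in val p) = (z == (f1 p).1) || (z == (f1 p).2).
Proof.
have [x [y [xin yin xy H]]] := pair2_elems p.
rewrite (@f1E p x y xin yin xy).
apply/idP/idP.
- by move=> /H []->; case: (ord2_cases x y) => -> /=; rewrite eqxx ?orbT.
- by case: (ord2_cases x y) => -> /= /orP[]/eqP->.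
Qed.

Lemma part1 : card_le_V Pair2G SquareG.
Proof.
exists f1; split.
- exists fset0 => g _ p /=.
  have [x [y [xin yin xy H]]] := pair2_elems p.
  rewrite (@f1E p x y xin yin xy) -ord2_g; apply: f1E.
  + by rewrite val_pair2_act; apply: in_imfset.
  + by rewrite val_pair2_act; apply: in_imfset.
  + by rewrite (inj_eq (@gact_inj g)).
- move=> p q E; apply: val_inj; apply/fsetP => z.
  by rewrite !mem_f1 E.
Qed.

Definition u0 : useq := exist _ [::] isT.
Definition mkU (s : seq Atom) : useq := insubd u0 s.
Lemma val_mkU s : uniq s -> val (mkU s) = s.
Proof. by move=> U; rewrite /mkU insubdK. Qed.

Definition l3 (p : Atom * Atom) : seq Atom :=
  if p.1 == p.2 then [:: p.1] else [:: p.1; p.2].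
Lemma l3_uniq p : uniq (l3 p).
Proof. rewrite /l3; case: ifP => //= /negbT; by rewrite inE andbT. Qed.

Definition f3 (p : Atom * Atom) : useq := mkU (l3 p).

Lemma part3 : card_le_V SquareG SeqG.
Proof.
exists f3; split.
- exists fset0 => g _ [x y] /=; apply: val_inj.
  rewrite val_useq_act /f3 !val_mkU ?l3_uniq // /l3 /=.
  by rewrite (inj_eq (@gact_inj g)); case: ifP.
- move=> [x y] [x' y'] /(congr1 val); rewrite /f3 !val_mkU ?l3_uniq // /l3 /=.
  case: ifP => [/eqP->|_]; case: ifP => [/eqP->|_] //=; by case=> *; subst.
Qed.

Definition firstof (s : seq Atom) n : option Atom := ohead [seq y <- s | y.1 == n].
Definition Fseq s := [seq x <- s | firstof s x.1 == Some x].
Definition Fs s : {fset Atom} := [fset x in Fseq s].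
Definition nrm s (x : Atom) : Atom := (x.1, x.2 - (odflt (x.1, 0%R) (firstof s x.1)).2)%R.
Definition code s := choice.pickle (map (nrm s) s).
Definition mF s := ((\max_(x <- Fseq s) x.1).+1 + code s)%N.
Definition Pb m : {fset Atom} := [fset (m, i) | i : 'I_3].
Definition f5 (s : useq) : {fset Atom} := Fs (val s) `|` Pb (mF (val s)).

Lemma mem_Pb m x : (x \in Pb m) = (x.1 == m).
Proof.
case: x => k i; rewrite /Pb; apply/imfsetP/eqP => /=.
  by case=> j _ [->].
by move=> ->; exists i.
Qed.

Lemma Pb_g g m : [fset gact g x | x in Pb m] = Pb m.
Proof.
apply/fsetP => z; rewrite mem_Pb; apply/imfsetP/eqP => [[x]|E].
  by rewrite mem_Pb => /eqP <- ->.
exists (z.1, z.2 - g z.1)%R; first by rewrite mem_Pb /= E.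
by case: z E => a b /= _; rewrite /gact /= subrK.
Qed.

Lemma firstof_map g s n : firstof (map (gact g) s) n = omap (gact g) (firstof s n).
Proof.
rewrite /firstof filter_map (@eq_filter _ _ (fun y => y.1 == n)) //.
by case: [seq y <- s | y.1 == n].
Qed.

Lemma firstof_spec s n y : firstof s n = Some y -> y \in s /\ y.1 = n.
Proof.
rewrite /firstof; case E: [seq y <- s | y.1 == n] => [|a l] //= [<-].
have : a \in [seq y <- s | y.1 == n] by rewrite E inE eqxx.
by rewrite mem_filter => /andP[/eqP -> ->].
Qed.

Lemma firstof_in s x : x \in s -> exists y, firstof s x.1 = Some y.
Proof.
rewrite /firstof => xin.
have : x \in [seq y <- s | y.1 == x.1] by rewrite mem_filter eqxx.
case: [seq y <- s | y.1 == x.1] => //= a l _; by exists a.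
Qed.

Lemma mem_Fs s y : (y \in Fs s) = (firstof s y.1 == Some y).
Proof.
rewrite inE mem_filter; apply/andP/idP => [[]//|E]; split => //.
by have [] := @firstof_spec _ _ _ (eqP E).
Qed.

Lemma firstof_Fs s s' : Fs s = Fs s' -> forall n, firstof s n = firstof s' n.
Proof.
move=> E n; case E1: (firstof s n) => [y|].
  have [yin yn] := @firstof_spec _ _ _ E1.
  have : y \in Fs s by rewrite mem_Fs yn E1.
  by rewrite E mem_Fs yn => /eqP ->.
case E2: (firstof s' n) => [y|] //.
have [_ yn] := @firstof_spec _ _ _ E2.
have : y \in Fs s' by rewrite mem_Fs yn E2.
by rewrite -E mem_Fs yn E1.
Qed.

Lemma Fs_uniq1 s x y : x \in Fs s -> y \in Fs s -> x.1 = y.1 -> x = y.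
Proof. by rewrite !mem_Fs => /eqP Ex /eqP Ey E; move: Ex; rewrite E Ey => [[]]. Qed.

Lemma Fs_lt s x : x \in Fs s -> x.1 < mF s.
Proof.
rewrite inE => xin.
have H : x.1 <= \max_(y <- Fseq s) y.1 by apply: (@leq_bigmax_seq _ (Fseq s) predT (fun x : Atom => x.1) x xin isT).
rewrite /mF; lia.
Qed.

Lemma Fseq_map g s : Fseq (map (gact g) s) = map (gact g) (Fseq s).
Proof.
rewrite /Fseq filter_map; congr map; apply: eq_filter => x /=.
rewrite firstof_map /=; case: (firstof s x.1) => [y|] //=.
by rewrite !eqE /= (inj_eq (@gact_inj g)).
Qed.

Lemma nrm_map g s x : x \in s -> nrm (map (gact g) s) (gact g x) = nrm s x.
Proof.
move=> /firstof_in [y E].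
rewrite /nrm firstof_map /= E /=.
have [_ yn] := @firstof_spec _ _ _ E.
rewrite yn; congr pair; by rewrite opprD addrACA subrr addr0.
Qed.

Lemma code_map g s : code (map (gact g) s) = code s.
Proof.
rewrite /code -map_comp; congr choice.pickle; apply/eq_in_map => x xin /=; exact: nrm_map.
Qed.

Lemma mF_map g s : mF (map (gact g) s) = mF s.
Proof. by rewrite /mF code_map Fseq_map big_map. Qed.

Lemma Fs_map g s : Fs (map (gact g) s) = [fset gact g x | x in Fs s].
Proof.
apply/fsetP => z; rewrite inE Fseq_map.
apply/mapP/imfsetP => [[x xin ->]|[x xin ->]]; exists x => //; by rewrite inE in xin |- *.
Qed.

Lemma nrm_inj s : injective (nrm s).
Proof.
move=> [n i] [m j] E; have /= E1 := congr1 fst E; have /= E2 := congr1 snd E.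
subst m; move: E2 => /addIr ->; by [].
Qed.

Lemma part5 : card_le_V SeqG FinG.
Proof.
exists f5; split.
- exists fset0 => g _ s /=.
  by rewrite /f5 val_useq_act Fs_map mF_map imfsetU Pb_g.
- move=> s s' E.
  have Hm : mF (val s') = mF (val s).
    have h0 : (mF (val s'), 0%R) \in f5 s by rewrite E in_fsetU mem_Pb eqxx orbT.
    have h1 : (mF (val s'), 1%R) \in f5 s by rewrite E in_fsetU mem_Pb eqxx orbT.
    move: h0 h1; rewrite !in_fsetU !mem_Pb /=.
    case: (mF (val s') =P mF (val s)) => // ne; rewrite !orbF => h0 h1.
    by have := @Fs_uniq1 _ _ _ h0 h1 erefl.
  have HF : Fs (val s) = Fs (val s').
    apply/fsetP => z.
    have : (z \in f5 s) = (z \in f5 s') by rewrite E.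
    rewrite /f5 !in_fsetU !mem_Pb Hm.
    case: (z.1 =P mF (val s)) => [zm|]; rewrite ?orbF ?orbT //.
    have -> : (z \in Fs (val s)) = false.
      by apply/negbTE/negP => /Fs_lt; rewrite zm ltnn.
    have -> : (z \in Fs (val s')) = false.
      by apply/negbTE/negP => /Fs_lt; rewrite zm Hm ltnn.
    by [].
  have Hfirst := @firstof_Fs _ _ HF.
  have Hmax : \max_(x <- Fseq (val s)) x.1 = \max_(x <- Fseq (val s')) x.1.
    apply: eq_big_idem; first exact: maxnn.
    move=> z; have := congr1 (fun S => z \in S) HF; by rewrite !inE.
  have Hcode : code (val s) = code (val s').
    by move: Hm; rewrite /mF Hmax => /addnI.
  have Ht : map (nrm (val s)) (val s) = map (nrm (val s')) (val s').
    by apply: (pcan_inj (@choice.pickleK _)); exact: Hcode.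
  have Hn : nrm (val s) =1 nrm (val s') by move=> x; rewrite /nrm Hfirst.
  rewrite (eq_map Hn) in Ht.
  apply: val_inj; exact: (inj_map (@nrm_inj _) Ht).
Qed.

Definition bnd (E : {fset Atom}) := (\max_(e <- E) e.1).+1.

Lemma fixes_bnd E g : (forall k, k < bnd E -> g k = 0%R) -> fixes g E.
Proof.
move=> H a aE; case: a aE => k i aE; rewrite /gact /= H ?addr0 //.
rewrite /bnd ltnS.
have := @leq_bigmax_seq _ (E : seq Atom) predT (fun x : Atom => x.1) (k, i) aE isT.
by [].
Qed.

Definition rot k (c : 'I_3) : Gelt := fun j => if j == k then c else 0%R.

Lemma rot_fix E k c : bnd E <= k -> fixes (rot k c) E.
Proof.
move=> Hk; apply: fixes_bnd => j jlt; rewrite /rot; case: eqP => // jk; lia.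
Qed.

Lemma gact_rot_ne k c x : x.1 != k -> gact (rot k c) x = x.
Proof. by case: x => a b /= H; rewrite /gact /rot /= (negbTE H) addr0. Qed.

Lemma gact_rot1 k x : x.1 = k -> gact (rot k 1%R) x <> x.
Proof.
case: x => a b /= ->; rewrite /gact /rot /= eqxx => E.
have /= E2 := congr1 snd E; move/eqP: E2; by rewrite addI3.
Qed.

Lemma part2 : ~ exists f : Pair2G -> SquareG, symmetric_fun f /\ bijective f.
Proof.
move=> [f [[E HE] [f' fK f'K]]].
set N := bnd E.
have C : forall (p : pair2) k, N <= k -> ((f p).1.1 = k \/ (f p).2.1 = k) ->
    exists2 x, x \in val p & x.1 = k.
  move=> p k Nk H.
  case: (boolP (has (fun x : Atom => x.1 == k) (val p))) => [/hasP [x xin /eqP xk]|hn].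
    by exists x.
  exfalso.
  have nk : forall x, x \in val p -> x.1 != k.
    move=> x xin; apply/negP => xk; move/hasP: hn; apply; by exists x.
  have fixp : pair2_act (rot k 1%R) p = p.
    apply: val_inj; rewrite val_pair2_act; apply/fsetP => z.
    apply/imfsetP/idP => [[x xin ->]|zin]; first by rewrite gact_rot_ne // nk.
    by exists z => //; rewrite gact_rot_ne // nk.
  have := HE (rot k 1%R) (@rot_fix _ _ 1%R Nk) p; rewrite /= fixp => Hf.
  case: H => H.
    by apply: (@gact_rot1 _ _ H); exact: (esym (congr1 fst Hf)).
  by apply: (@gact_rot1 _ _ H); exact: (esym (congr1 snd Hf)).
set n := N; set n' := N.+1.
set u : Atom * Atom := ((n, 0%R), (n', 0%R)).
set v : Atom * Atom := ((n', 0%R), (n, 0%R)).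
have [x xp xn] : exists2 x, x \in val (f' u) & x.1 = n.
  by apply: C => //; rewrite f'K; left.
have [y yp yn] : exists2 x, x \in val (f' u) & x.1 = n'.
  by apply: C => //; rewrite f'K; right.
have [x' xq xn'] : exists2 x, x \in val (f' v) & x.1 = n.
  by apply: C => //; rewrite f'K; right.
have [y' yq yn'] : exists2 x, x \in val (f' v) & x.1 = n'.
  by apply: C => //; rewrite f'K; left.
have nn : n != n' by rewrite /n' /n; lia.
have xy : x != y by apply/negP => /eqP e; move: nn; rewrite -xn -yn e eqxx.
have xy' : x' != y' by apply/negP => /eqP e; move: nn; rewrite -xn' -yn' e eqxx.
set h : Gelt := fun j => if j == n then (x'.2 - x.2)%R else if j == n' then (y'.2 - y.2)%R else 0%R.
have hE : fixes h E.
  apply: fixes_bnd => j jlt; rewrite /h.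
  case: eqP => [jn|]; first by rewrite /n in jn; lia.
  case: eqP => [jn|] //; by rewrite /n' in jn; lia.
have hx : gact h x = x'.
  rewrite /gact xn /h eqxx addrC subrK -xn'; by case: (x').
have hy : gact h y = y'.
  rewrite /gact yn /h eq_sym (negbTE nn) eqxx addrC subrK -yn'; by case: (y').
have hpq : pair2_act h (f' u) = f' v.
  apply: val_inj; rewrite val_pair2_act; apply/fsetP => z.
  apply/imfsetP/idP => [[w win ->]|zin].
    by case: (@pair2_mem2 _ _ _ xp yp xy _ win) => ->; rewrite ?hx ?hy.
  case: (@pair2_mem2 _ _ _ xq yq xy' _ zin) => ->; [by exists x | by exists y].
have := HE h hE (f' u); rewrite /= hpq !f'K /= => /(congr1 (fun w : Atom * Atom => w.1.1)).
rewrite /= /n' /n; lia.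
Qed.

Lemma part4 : ~ exists f : SquareG -> SeqG, symmetric_fun f /\ bijective f.
Proof.
move=> [f [[E HE] [f' fK f'K]]].
set N := bnd E.
have C : forall (p : Atom * Atom) k, N <= k ->
    has (fun z : Atom => z.1 == k) (val (f p)) -> p.1.1 = k \/ p.2.1 = k.
  move=> [a b] k Nk /hasP [z zin /eqP zk] /=.
  case: (a.1 =P k) => [|ak]; first by left.
  case: (b.1 =P k) => [|bk]; first by right.
  exfalso.
  have := HE (rot k 1%R) (@rot_fix _ _ 1%R Nk) (a, b).
  rewrite /= !gact_rot_ne; try by apply/eqP.
  move/(congr1 val); rewrite val_useq_act => /esym/map_fix/(_ z zin).
  exact: gact_rot1.
have T : forall p q : Atom * Atom, p.1.1 = q.1.1 -> p.2.1 = q.2.1 -> p.1.1 != p.2.1 ->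
    N <= p.1.1 -> N <= p.2.1 -> map fst (val (f q)) = map fst (val (f p)).
  move=> [x y] [x' y'] /= e1 e2 ne Nx Ny.
  set h : Gelt := fun j => if j == x.1 then (x'.2 - x.2)%R
                          else if j == y.1 then (y'.2 - y.2)%R else 0%R.
  have hE : fixes h E.
    apply: fixes_bnd => j jlt; rewrite /h.
    case: eqP => [jn|]; first lia.
    case: eqP => [jn|] //; lia.
  have hx : gact h x = x'.
    rewrite /gact /h eqxx addrC subrK e1; by case: (x').
  have hy : gact h y = y'.
    rewrite /gact /h eq_sym (negbTE ne) eqxx addrC subrK e2; by case: (y').
  have := HE h hE (x, y); rewrite /= hx hy => ->.
  by rewrite val_useq_act -map_comp.
set n := N; set n' := N.+1.
have nn : (n == n') = false by rewrite /n' /n; lia.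
have nn' : (n' == n) = false by rewrite eq_sym.
have o01 : ((0%R : 'I_3) == 1%R) = false by [].
set s1 := [:: (n, 0%R); (n', 0%R)] : seq Atom.
set s2 := [:: (n', 0%R); (n, 0%R)] : seq Atom.
set s3 := [:: (n, 0%R); (n, 1%R); (n', 0%R)] : seq Atom.
have U1 : uniq s1 by rewrite /= inE xpair_eqE nn.
have U2 : uniq s2 by rewrite /= inE xpair_eqE nn'.
have U3 : uniq s3 by rewrite /= !inE !xpair_eqE nn eqxx o01.
have O : forall s, uniq s -> has (fun z : Atom => z.1 == n) s ->
    has (fun z : Atom => z.1 == n') s ->
    let p := f' (mkU s) in (p.1.1 = n /\ p.2.1 = n') \/ (p.1.1 = n' /\ p.2.1 = n).
  move=> s Us h1 h2 /=.
  have := C (f' (mkU s)) n (leqnn _); rewrite f'K val_mkU // => /(_ h1).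
  have := C (f' (mkU s)) n' (leqnSn _); rewrite f'K val_mkU // => /(_ h2).
  rewrite /n' /n; lia.
have P : forall s s', uniq s -> uniq s' ->
    has (fun z : Atom => z.1 == n) s -> has (fun z : Atom => z.1 == n') s ->
    has (fun z : Atom => z.1 == n) s' -> has (fun z : Atom => z.1 == n') s' ->
    (f' (mkU s)).1.1 = (f' (mkU s')).1.1 -> map fst s' = map fst s.
  move=> s s' Us Us' h1 h2 h1' h2' e.
  have := O _ Us h1 h2; have := O _ Us' h1' h2' => /= o' o.
  have e2 : (f' (mkU s)).2.1 = (f' (mkU s')).2.1 by rewrite /n' /n in o o'; lia.
  have ne : (f' (mkU s)).1.1 != (f' (mkU s)).2.1 by rewrite /n' /n in o o'; apply/eqP; lia.
  have N1 : N <= (f' (mkU s)).1.1 by rewrite /n' /n in o o'; lia.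
  have N2 : N <= (f' (mkU s)).2.1 by rewrite /n' /n in o o'; lia.
  have := T _ _ e e2 ne N1 N2; by rewrite !f'K !val_mkU.
have H1n : has (fun z : Atom => z.1 == n) s1 by rewrite /= eqxx.
have H1n' : has (fun z : Atom => z.1 == n') s1 by rewrite /= eqxx orbT.
have H2n : has (fun z : Atom => z.1 == n) s2 by rewrite /= eqxx orbT.
have H2n' : has (fun z : Atom => z.1 == n') s2 by rewrite /= eqxx.
have H3n : has (fun z : Atom => z.1 == n) s3 by rewrite /= eqxx.
have H3n' : has (fun z : Atom => z.1 == n') s3 by rewrite /= eqxx !orbT.
have := O _ U1 H1n H1n'; have := O _ U2 H2n H2n'; have := O _ U3 H3n H3n' => /= o3 o2 o1.
have : (f' (mkU s1)).1.1 = (f' (mkU s2)).1.1 \/ (f' (mkU s1)).1.1 = (f' (mkU s3)).1.1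
   \/ (f' (mkU s2)).1.1 = (f' (mkU s3)).1.1 by lia.
case=> [e|[e|e]].
- have := P _ _ U1 U2 H1n H1n' H2n H2n' e => /= [] /eqP.
  by rewrite eqseq_cons nn'.
- have := P _ _ U1 U3 H1n H1n' H3n H3n' e; by [].
- have := P _ _ U2 U3 H2n H2n' H3n H3n' e; by [].
Qed.

Fixpoint words (l : seq Atom) k : seq (seq Atom) :=
  if k is k'.+1 then [::] :: [seq x :: w | x <- l, w <- words l k'] else [:: [::]].

Lemma mem_words l k s : size s <= k -> all (mem l) s -> s \in words l k.
Proof.
elim: k s => [|k IH] [|x s] //=; rewrite ?inE ?eqxx //.
move=> sk /andP[xl sl]; apply/orP; right; apply/allpairsP; exists (x, s) => /=.
by split => //; apply: IH.
Qed.

Lemma part6 : ~ exists f : SeqG -> FinG, symmetric_fun f /\ bijective f.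
Proof.
move=> [f [[E HE] [f' fK f'K]]].
set N := bnd E.
set r : Gelt := fun k => if k < N then 0%R else 1%R.
have rE : fixes r E by apply: fixes_bnd => k kN; rewrite /r kN.
have Hlow : forall m x, x \in val (f' (Pb m)) -> x.1 < N.
  move=> m x xin.
  have H1 : useq_act r (f' (Pb m)) = f' (Pb m).
    apply: (can_inj fK); have := HE r rE (f' (Pb m)); rewrite /= f'K Pb_g; by [].
  have := congr1 val H1; rewrite val_useq_act => /map_fix /(_ x xin).
  rewrite /gact /r; case: ltnP => // _ e.
  have /= /eqP := congr1 snd e; by rewrite addI3.
set L := [seq (k, i) | k <- iota 0 N, i <- enum 'I_3].
have inL : forall x : Atom, x.1 < N -> x \in L.
  move=> [k i] /= kN; apply/allpairsP; exists (k, i) => /=.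
  split => //; last by rewrite mem_enum.
  have : k \in iota 0 N by rewrite mem_iota add0n kN.
  by [].
set X := words L (size L).
have inX : forall m, val (f' (Pb m)) \in X.
  move=> m; apply: mem_words.
    apply: uniq_leq_size; first exact: valP.
    by move=> x /Hlow /inL.
  by apply/allP => x /Hlow /inL.
set W := map (fun m => val (f' (Pb m))) (iota 0 (size X).+1).
have UW : uniq W.
  rewrite map_inj_in_uniq ?iota_uniq // => m m' _ _ /val_inj e.
  have : Pb m = Pb m' by rewrite -(f'K (Pb m)) e f'K.
  move/(congr1 (fun S => (m, 0%R) \in S)); rewrite !mem_Pb eqxx /= => /esym /eqP.
  by [].
have sub : {subset W <= X} by move=> w /mapP [m _ ->].
have := uniq_leq_size UW sub.
by rewrite size_map size_iota ltnn.
Qed.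

Theorem mainTheorem11 :
  card_lt_V Pair2G SquareG /\ card_lt_V SquareG SeqG /\ card_lt_V SeqG FinG.
Proof.
split; [|split]; split.
- exact: part1.
- exact: part2.
- exact: part3.
- exact: part4.
- exact: part5.
- exact: part6.
Qed.
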